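(* Consider, for $x\ge0$, the planar system $$\dot x=1,\qquad \dot y=-ay-\sin\!\left[\pi x\left(1+\tfrac12\lambda\right)\right],$$ with $\lambda=\operatorname{sign}(y)$ for $y\ne0$ and $\lambda\in(-1,1)$ on $y=0$. For all $a>0$ there exist solutions that start in $S_+=\{y>0\}$ and whose evolution is constrained to $\overline S_-=\{y\le0\}$ for all $x>x_{T_a}$, where $x_{T_a}$ denotes the smallest $x$ at which they hit the switching line $y=0$. Moreover, these solutions coincide with the periodic solution $y_d$ described below for $x\ge 4n$, for some $n\in\mathbb{N}$.
   Context: For $y>0$ the system is $\dot y=-ay-\sin(3\pi x/2)$ and for $y<0$ it is $\dot y=-ay-\sin(\pi x/2)$. The sliding manifold is $\Lambda^N=\{(x,0):x\in(\frac{2n}{3},2n),\ n\ge1\}$; a solution may remain on $y=0$ (with $\dot x=1$) over an interval only while on $\Lambda^N$. The function $y_d$ is the sliding $4$-periodic solution lying in $\{y\le0\}$ with $y_d(x)<0$ for $x\in(4n,4n+x_a)$ and $y_d(x)=0$ for $x\in\{0\}\cup[4n+x_a,4(n+1)]$, $n\in\mathbb{N}$, where $x_a\in(2,4)$ is the first positive return to $y=0$ of the solution of $\dot y=-ay-\sin(\pi x/2)$, $y(0)=0$. *)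

(* Defs.v *)
From Stdlib Require Import Reals Lra.
From Coquelicot Require Import Coquelicot.
Open Scope R_scope.

Definition lam_adm (y lam : R) : Prop :=
  (0 < y /\ lam = 1) \/ (y < 0 /\ lam = -1) \/ (y = 0 /\ -1 < lam < 1).

(** Right-hand side of  dy/dx = -a y - sin(pi x (1 + lambda/2))  (dx/dt = 1,
    so x is used as the time variable). *)
Definition field (a x y lam : R) : R := - a * y - sin (PI * x * (1 + lam / 2)).

Definition negligible (N : R -> Prop) : Prop :=
  forall eps, 0 < eps ->
  exists l r : nat -> R,
    (forall n, l n <= r n) /\
    (forall x, N x -> exists n, l n < x < r n) /\
    (forall m, sum_f_R0 (fun n => r n - l n) m <= eps).

Definition abs_cont_on (y : R -> R) (c d : R) : Prop :=
  forall eps, 0 < eps -> exists delta, 0 < delta /\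
  forall (n : nat) (u v : nat -> R),
    (forall i, (i <= n)%nat -> c <= u i /\ u i <= v i /\ v i <= d) ->
    (forall i, (i < n)%nat -> v i <= u (S i)) ->
    sum_f_R0 (fun i => v i - u i) n < delta ->
    sum_f_R0 (fun i => Rabs (y (v i) - y (u i))) n < eps.

Definition is_solution (a x0 : R) (y : R -> R) : Prop :=
  0 <= x0 /\
  (forall d, x0 <= d -> abs_cont_on y x0 d) /\
  exists N : R -> Prop, negligible N /\
    forall x, x0 < x -> ~ N x ->
      exists lam, lam_adm (y x) lam /\ is_derive y x (field a x (y x) lam).

(** The 4-periodic sliding solution y_d, built from phi (the solution of
    y' = -a y - sin(pi x/2), y(0) = 0) and its first positive zero xa:
    y_d(4n + r) = phi r for r in [0, xa), and 0 for r in [xa, 4). *)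
Definition yd (phi : R -> R) (xa x : R) : R :=
  let r := x - 4 * IZR (Int_part (x / 4)) in
  if Rlt_dec r xa then phi r else 0.

(* Main.v *)
Require Import Defs.
From Stdlib Require Import Reals Lra Lia ZArith Arith.
From Coquelicot Require Import Coquelicot.
Open Scope R_scope.

Definition Lip (f : R -> R) (L p q : R) : Prop :=
  forall u v, p <= u -> u <= v -> v <= q -> Rabs (f v - f u) <= L * (v - u).

Lemma Lip_glue f L p q r : Lip f L p q -> Lip f L q r -> Lip f L p r.
Proof.
  intros H1 H2 u v Hu Huv Hv.
  destruct (Rle_dec v q) as [Hvq|Hvq].
  - apply H1; lra.
  - destruct (Rle_dec q u) as [Hqu|Hqu].
    + apply H2; lra.
    + assert (A := H1 u q Hu ltac:(lra) ltac:(lra)).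
      assert (B := H2 q v ltac:(lra) ltac:(lra) Hv).
      replace (f v - f u) with ((f v - f q) + (f q - f u)) by ring.
      eapply Rle_trans; [apply Rabs_triang|]. nra.
Qed.

Lemma Lip_sub f L p q p' q' : Lip f L p q -> p <= p' -> q' <= q -> Lip f L p' q'.
Proof. intros H a b u v ? ? ?. apply H; lra. Qed.

Lemma Lip_ext f g L p q : Lip f L p q -> (forall x, p <= x <= q -> g x = f x) -> Lip g L p q.
Proof. intros H E u v ? ? ?. rewrite !E by lra. apply H; lra. Qed.

Lemma Lip_shift f L p q s : Lip f L p q -> Lip (fun x => f (x - s)) L (p + s) (q + s).
Proof. intros H u v ? ? ?. replace (v - u) with ((v - s) - (u - s)) by ring. apply H; lra. Qed.

Lemma Lip_deriv g g' L p q :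
  (forall x, p <= x <= q -> is_derive g x (g' x)) ->
  (forall x, p <= x <= q -> Rabs (g' x) <= L) -> Lip g L p q.
Proof.
  intros Hd Hb u v Hu Huv Hv.
  destruct (Req_dec u v) as [->|Hne].
  - replace (g v - g v) with 0 by ring. rewrite Rabs_R0. lra.
  - destruct (MVT_cor2 g g' u v ltac:(lra)) as [c [Hc1 Hc2]].
    { intros c Hc. apply is_derive_Reals. apply Hd. lra. }
    rewrite Hc1, Rabs_mult, (Rabs_right (v - u)) by lra.
    apply Rmult_le_compat_r; [lra|]. apply Hb. lra.
Qed.

Lemma Lip_abs_cont f L c d : 0 < L -> Lip f L c d -> abs_cont_on f c d.
Proof.
  intros HL H eps Heps. exists (eps / L). split.
  { apply Rdiv_lt_0_compat; lra. }
  intros n u v H1 H2 H3.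
  eapply Rle_lt_trans.
  { apply sum_Rle with (Bn := fun i => (v i - u i) * L). intros i Hi.
    destruct (H1 i Hi) as [? [? ?]]. rewrite Rmult_comm. apply H; lra. }
  rewrite <- scal_sum.
  apply Rmult_lt_reg_l with (/ L). { apply Rinv_0_lt_compat; lra. }
  replace (/ L * (L * sum_f_R0 (fun i => v i - u i) n)) with (sum_f_R0 (fun i => v i - u i) n) by (field; lra).
  replace (/ L * eps) with (eps / L) by (field; lra). exact H3.
Qed.

Lemma negl_mono (A B : R -> Prop) : negligible B -> (forall x, A x -> B x) -> negligible A.
Proof.
  intros H S eps He. destruct (H eps He) as [l [r [H1 [H2 H3]]]].
  exists l, r. repeat split; auto.
Qed.

Lemma geom_sum eps m : sum_f_R0 (fun n => eps / 2 ^ (S n)) m = eps - eps / 2 ^ (S m).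
Proof.
  induction m as [|m IH].
  - simpl. field.
  - rewrite tech5, IH. simpl. field. apply pow_nonzero; lra.
Qed.

Lemma negl_seq (e : nat -> R) : negligible (fun x => exists n, x = e n).
Proof.
  intros eps He.
  exists (fun n => e n - eps / 2 ^ (S (S n))), (fun n => e n + eps / 2 ^ (S (S n))).
  assert (Hp : forall n, 0 < eps / 2 ^ (S (S n))).
  { intro n. apply Rdiv_lt_0_compat; [lra|]. apply pow_lt; lra. }
  repeat split.
  - intro n. specialize (Hp n). lra.
  - intros x [n ->]. exists n. specialize (Hp n). lra.
  - intro m. 
    replace (sum_f_R0 _ m) with (sum_f_R0 (fun n => eps / 2 ^ (S n)) m).
    + rewrite geom_sum. assert (0 < eps / 2 ^ (S m)) by (apply Rdiv_lt_0_compat; [lra|apply pow_lt; lra]). lra.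
    + apply sum_eq. intros i _. simpl. field. apply pow_nonzero; lra.
Qed.

Lemma loc_eq (f g : R -> R) p q x : p < x < q -> (forall t, p < t < q -> f t = g t) ->
  locally x (fun t => f t = g t).
Proof.
  intros Hx H.
  assert (Hd : 0 < Rmin (x - p) (q - x)) by (apply Rmin_pos; lra).
  exists (mkposreal _ Hd). intros t Ht. apply H.
  change (Rabs (t - x) < Rmin (x - p) (q - x)) in Ht.
  apply Rabs_def2 in Ht. destruct Ht as [H1 H2].
  assert (Rmin (x - p) (q - x) <= x - p) by apply Rmin_l.
  assert (Rmin (x - p) (q - x) <= q - x) by apply Rmin_r. lra.
Qed.

Lemma sliding x : 1 < x -> exists lam, -1 < lam < 1 /\ sin (PI * x * (1 + lam / 2)) = 0.
Proof.
  intro Hx. destruct (archimed (x / 2)) as [H1 H2].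
  set (z := IZR (up (x / 2))) in *.
  exists (2 * (z / x) - 2). set (w := z / x).
  assert (Hz : z = w * x) by (unfold w; field; lra).
  split; [split|].
  - nra.
  - nra.
  - apply sin_eq_0_1. exists (up (x / 2)). fold z. rewrite Hz. field.
Qed.

Lemma yd_val phi xa (k : nat) r : 0 <= r < 4 ->
  yd phi xa (4 * INR k + r) = if Rlt_dec r xa then phi r else 0.
Proof.
  intro Hr. unfold yd.
  assert (E : Int_part ((4 * INR k + r) / 4) = Z.of_nat k).
  { symmetry. apply Int_part_spec. rewrite <- INR_IZR_INZ. lra. }
  rewrite E, <- INR_IZR_INZ.
  replace (4 * INR k + r - 4 * INR k) with r by ring. reflexivity.
Qed.

Lemma decomp x : 0 <= x -> exists (k : nat) r, x = 4 * INR k + r /\ 0 <= r < 4.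
Proof.
  intro Hx. destruct (base_Int_part (x / 4)) as [H1 H2].
  assert (Hz : (0 <= Int_part (x / 4))%Z).
  { apply le_IZR. assert (IZR (Int_part (x/4)) > -1) by lra.
    apply lt_IZR in H. simpl. apply IZR_le. lia. }
  exists (Z.to_nat (Int_part (x / 4))), (x - 4 * IZR (Int_part (x / 4))).
  rewrite INR_IZR_INZ, Znat.Z2Nat.id by exact Hz. split; [ring | lra].
Qed.

Definition psi (a x : R) : R :=
  - (a * sin (PI * x / 2) - (PI / 2) * cos (PI * x / 2) + (PI / 2) * exp (- a * x))
  / (a ^ 2 + (PI / 2) ^ 2).

Lemma psi_deriv a x : 0 < a -> is_derive (psi a) x (- a * psi a x - sin (PI * x / 2)).
Proof.
  intro Ha. unfold psi. auto_derive; [exact I|].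
  assert (0 < PI) by apply PI_RGT_0.
  unfold Rdiv. field. nra.
Qed.

Definition Pp (a x : R) : R :=
  (PI * (1 + 1/2) * exp (a * (2 - x)) - (a * sin (PI * x * (1 + 1/2)) - PI * (1 + 1/2) * cos (PI * x * (1 + 1/2))))
  / (a ^ 2 + (PI * (1 + 1/2)) ^ 2).

Lemma Pp_deriv a x : 0 < a -> is_derive (Pp a) x (- a * Pp a x - sin (PI * x * (1 + 1/2))).
Proof.
  intro Ha. unfold Pp. auto_derive; [exact I|].
  assert (0 < PI) by apply PI_RGT_0.
  unfold Rdiv, Rminus. field. nra.
Qed.

Lemma is_derive_eq (f : R -> R) x d1 d2 : is_derive f x d1 -> d1 = d2 -> is_derive f x d2.
Proof. intros H ->. exact H. Qed.

Lemma exp_mult_deriv (a : R) (g : R -> R) (s : R -> R) t :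
  (forall x, is_derive g x (- a * g x - s x)) ->
  is_derive (fun t => exp (a * t) * g t) t (- exp (a * t) * s t).
Proof.
  intro Hg. eapply is_derive_eq.
  { apply (is_derive_mult (fun t => exp (a * t)) g).
    - auto_derive; [exact I|reflexivity].
    - apply Hg.
    - intros; apply Rmult_comm. }
  unfold plus, mult; simpl. ring.
Qed.

Lemma is_derive_Rminus (f g : R -> R) x df dg : is_derive f x df -> is_derive g x dg ->
  is_derive (fun t => f t - g t) x (df - dg).
Proof. intros H1 H2. exact (is_derive_minus f g x df dg H1 H2). Qed.

Section PhiSec.
Variables (a : R) (phi : R -> R) (xa : R).
Hypotheses (Ha : 0 < a) (H0 : phi 0 = 0)
  (Hd : forall x, is_derive phi x (- a * phi x - sin (PI * x / 2)))
  (Hxa : 0 < xa) (Hpxa : phi xa = 0) (Hnz : forall x, 0 < x < xa -> phi x <> 0).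

Lemma phi_eq_psi x : 0 <= x -> phi x = psi a x.
Proof.
  intro Hx.
  assert (Hg : forall t, is_derive (fun t => phi t - psi a t) t (- a * (phi t - psi a t) - (fun _ => 0) t)).
  { intro t. eapply is_derive_eq. { apply is_derive_Rminus; [apply Hd | apply psi_deriv; exact Ha]. }
    lra. }
  assert (Hp0 : psi a 0 = 0).
  { unfold psi. rewrite Rmult_0_r, Rmult_0_r, Rdiv_0_l, sin_0, cos_0, exp_0. field.
    assert (0 < PI) by apply PI_RGT_0. assert (0 < a * a) by (apply Rmult_lt_0_compat; lra).
    pose proof (Rle_0_sqr (PI / 2)). unfold Rsqr in *. lra. }
  destruct (Req_dec x 0) as [->|Hne]; [rewrite H0, Hp0; reflexivity|].
  destruct (MVT_cor2 (fun t => exp (a * t) * (phi t - psi a t)) (fun t => - exp (a * t) * 0) 0 x ltac:(lra))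
    as [c [Hc _]].
  { intros c _. apply is_derive_Reals. apply (exp_mult_deriv a _ (fun _ => 0)). exact Hg. }
  rewrite H0, Hp0, Rmult_0_r, exp_0 in Hc.
  assert (E : exp (a * x) * (phi x - psi a x) = 0) by lra.
  apply Rmult_integral in E. destruct E as [E|E].
  - pose proof (exp_pos (a * x)). lra.
  - lra.
Qed.

Lemma phi_neg_small x : 0 < x <= 2 -> phi x < 0.
Proof.
  intro Hx.
  destruct (MVT_cor2 (fun t => exp (a * t) * phi t) (fun t => - exp (a * t) * sin (PI * t / 2)) 0 x ltac:(lra))
    as [c [Hc Hc2]].
  { intros c _. apply is_derive_Reals. apply (exp_mult_deriv a _ (fun t => sin (PI * t / 2))). exact Hd. }
  rewrite H0, Rmult_0_r in Hc.
  assert (0 < PI) by apply PI_RGT_0.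
  assert (Hs : 0 < sin (PI * c / 2)).
  { assert (0 < PI * c) by (apply Rmult_lt_0_compat; lra).
    assert (PI * c < PI * 2) by (apply Rmult_lt_compat_l; lra).
    apply sin_gt_0; lra. }
  pose proof (exp_pos (a * c)). pose proof (exp_pos (a * x)).
  assert (0 < exp (a * c) * sin (PI * c / 2) * x) by (repeat apply Rmult_lt_0_compat; lra).
  assert (exp (a * x) * phi x < 0) by lra.
  destruct (Rlt_dec (phi x) 0) as [|Hn]; [assumption|].
  assert (0 <= exp (a * x) * phi x) by (apply Rmult_le_pos; lra). lra.
Qed.

Lemma phi4_pos : 0 < phi 4.
Proof.
  rewrite phi_eq_psi by lra. unfold psi.
  replace (PI * 4 / 2) with (2 * PI) by field. rewrite sin_2PI, cos_2PI.
  assert (0 < PI) by apply PI_RGT_0.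
  assert (exp (- a * 4) < 1) by (rewrite <- exp_0; apply exp_increasing; lra).
  assert (PI / 2 * exp (- a * 4) < PI / 2 * 1) by (apply Rmult_lt_compat_l; lra).
  assert (0 < a ^ 2) by (apply pow_lt; lra). pose proof (pow2_ge_0 (PI / 2)).
  apply Rdiv_lt_0_compat; lra.
Qed.

Lemma phi_cont : continuity phi.
Proof.
  intro x. apply derivable_continuous_pt. exists (- a * phi x - sin (PI * x / 2)).
  apply is_derive_Reals. apply Hd.
Qed.

Lemma phi_no_zero_gt : forall x, 1 < x < xa -> phi x < 0.
Proof.
  intros x Hx. destruct (Rlt_dec (phi x) 0) as [?|Hge]; [assumption|].
  exfalso. assert (Hpos : 0 < phi x).
  { assert (phi x <> 0) by (apply Hnz; lra). lra. }
  destruct (IVT phi 1 x phi_cont ltac:(lra) (phi_neg_small 1 ltac:(lra)) Hpos) as [z [Hz Hz0]].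
  assert (z <> 1) by (intro; subst; pose proof (phi_neg_small 1 ltac:(lra)); lra).
  assert (z <> x) by (intro; subst; lra).
  apply (Hnz z); [lra | exact Hz0].
Qed.

Lemma phi_neg x : 0 < x < xa -> phi x < 0.
Proof.
  intro Hx. destruct (Rle_dec x 2). { apply phi_neg_small; lra. }
  apply phi_no_zero_gt; lra.
Qed.

Lemma xa_gt2 : 2 < xa.
Proof.
  destruct (Rlt_dec 2 xa) as [|H]; [assumption|].
  pose proof (phi_neg_small xa ltac:(lra)). lra.
Qed.

Lemma xa_le4 : xa <= 4.
Proof.
  destruct (Rle_dec xa 4) as [|H]; [assumption|].
  pose proof (phi_no_zero_gt 4 ltac:(lra)). pose proof phi4_pos. lra.
Qed.

Lemma phi_bound x : 0 <= x -> Rabs (phi x) <= (a + PI) / (a ^ 2 + (PI / 2) ^ 2).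
Proof.
  intro Hx. rewrite phi_eq_psi by exact Hx. unfold psi.
  assert (0 < PI) by apply PI_RGT_0.
  assert (HD : 0 < a ^ 2 + (PI / 2) ^ 2) by (assert (0 < a ^ 2) by (apply pow_lt; lra); pose proof (pow2_ge_0 (PI / 2)); lra).
  rewrite Rabs_div by lra. rewrite (Rabs_right (a ^ 2 + _)) by lra.
  apply Rmult_le_compat_r; [left; apply Rinv_0_lt_compat; lra|].
  rewrite Rabs_Ropp.
  assert (exp (- a * x) <= 1) by (rewrite <- exp_0; destruct (Req_dec x 0); [subst; rewrite Rmult_0_r; lra|left; apply exp_increasing; assert (0 < a * x) by (apply Rmult_lt_0_compat; lra); lra]).
  pose proof (exp_pos (- a * x)).
  pose proof (SIN_bound (PI * x / 2)). pose proof (COS_bound (PI * x / 2)).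
  destruct (SIN_bound (PI * x / 2)), (COS_bound (PI * x / 2)).
  assert (- a <= a * sin (PI * x / 2) <= a) by (split; nra).
  assert (- (PI/2) <= PI / 2 * cos (PI * x / 2) <= PI/2) by (split; nra).
  assert (0 <= PI / 2 * exp (- a * x) <= PI/2) by (split; nra).
  apply Rabs_le. split; lra.
Qed.

End PhiSec.

Lemma trig3 u : sin (2 * PI + (PI - u)) = sin u /\ cos (2 * PI + (PI - u)) = - cos u.
Proof.
  rewrite sin_plus, cos_plus, sin_minus, cos_minus, sin_2PI, cos_2PI, sin_PI, cos_PI.
  split; ring.
Qed.

Lemma Pp_2 a : Pp a 2 = 0.
Proof.
  unfold Pp. replace (PI * 2 * (1 + 1/2)) with (2 * PI + (PI - 0)) by field.
  destruct (trig3 0) as [-> ->]. rewrite sin_0, cos_0.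
  replace (a * (2 - 2)) with 0 by ring. rewrite exp_0. unfold Rdiv. ring.
Qed.

Lemma Pp_pos a x : 0 < a -> 3/2 <= x < 2 -> 0 < Pp a x.
Proof.
  intros Ha Hx. unfold Pp. set (c := PI * (1 + 1/2)). set (t := 2 - x).
  assert (HPI : 0 < PI) by apply PI_RGT_0.
  assert (Hc : 0 < c) by (unfold c; lra).
  replace (PI * x * (1 + 1/2)) with (2 * PI + (PI - c * t)) by (unfold c, t; field).
  destruct (trig3 (c * t)) as [-> ->].
  assert (Ht : 0 < t) by (unfold t; lra).
  assert (Hct : 0 < c * t) by (apply Rmult_lt_0_compat; lra).
  assert (Hat : 0 < a * t) by (apply Rmult_lt_0_compat; lra).
  pose proof (exp_ineq1 (a * t) ltac:(lra)).
  pose proof (sin_lt_x (c * t) Hct). pose proof (COS_bound (c * t)).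
  assert (c * (1 + a * t) < c * exp (a * t)) by (apply Rmult_lt_compat_l; lra).
  assert (a * sin (c * t) < a * (c * t)) by (apply Rmult_lt_compat_l; lra).
  assert (c * cos (c * t) <= c * 1) by (apply Rmult_le_compat_l; lra).
  apply Rdiv_lt_0_compat.
  - replace (a * (c * t)) with (c * (a * t)) in * by ring. lra.
  - assert (0 < a ^ 2) by (apply pow_lt; lra). pose proof (pow2_ge_0 c). lra.
Qed.

Definition Mb (a : R) : R :=
  (PI * (1 + 1/2) * exp a + a + PI * (1 + 1/2)) / (a ^ 2 + (PI * (1 + 1/2)) ^ 2)
  + (a + PI) / (a ^ 2 + (PI / 2) ^ 2).

Lemma Mb_parts a : 0 < a ->
  0 <= (PI * (1 + 1/2) * exp a + a + PI * (1 + 1/2)) / (a ^ 2 + (PI * (1 + 1/2)) ^ 2) /\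
  0 <= (a + PI) / (a ^ 2 + (PI / 2) ^ 2).
Proof.
  intro Ha. assert (HPI : 0 < PI) by apply PI_RGT_0. pose proof (exp_pos a).
  assert (0 < a ^ 2) by (apply pow_lt; lra).
  pose proof (pow2_ge_0 (PI * (1 + 1/2))). pose proof (pow2_ge_0 (PI / 2)).
  assert (0 < PI * (1 + 1/2) * exp a) by (apply Rmult_lt_0_compat; lra).
  split; left; apply Rdiv_lt_0_compat; lra.
Qed.

Lemma Pp_bound a x : 0 < a -> 3/2 <= x <= 2 -> Rabs (Pp a x) <= Mb a.
Proof.
  intros Ha Hx. destruct (Mb_parts a Ha) as [_ H2]. unfold Mb.
  apply Rle_trans with ((PI * (1 + 1/2) * exp a + a + PI * (1 + 1/2)) / (a ^ 2 + (PI * (1 + 1/2)) ^ 2)); [|lra].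
  unfold Pp. set (c := PI * (1 + 1/2)).
  assert (HPI : 0 < PI) by apply PI_RGT_0.
  assert (Hc : 0 < c) by (unfold c; lra).
  assert (HD : 0 < a ^ 2 + c ^ 2) by (assert (0 < a ^ 2) by (apply pow_lt; lra); pose proof (pow2_ge_0 c); lra).
  rewrite Rabs_div by lra. rewrite (Rabs_right (a ^ 2 + _)) by lra.
  apply Rmult_le_compat_r; [left; apply Rinv_0_lt_compat; lra|].
  assert (exp (a * (2 - x)) <= exp a).
  { destruct (Req_dec x 2) as [->|]. { replace (a * (2 - 2)) with 0 by ring. rewrite exp_0.
      pose proof (exp_ineq1_le a). lra. }
    left. apply exp_increasing. assert (a * (2 - x) <= a * (1/2)) by (apply Rmult_le_compat_l; lra). lra. }
  pose proof (exp_pos (a * (2 - x))).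
  destruct (SIN_bound (PI * x * (1 + 1/2))), (COS_bound (PI * x * (1 + 1/2))).
  assert (c * exp (a * (2 - x)) <= c * exp a) by (apply Rmult_le_compat_l; lra).
  assert (0 <= c * exp (a * (2 - x))) by (apply Rmult_le_pos; lra).
  assert (- a <= a * sin (PI * x * (1 + 1/2)) <= a) by (split; nra).
  assert (- c <= c * cos (PI * x * (1 + 1/2)) <= c) by (split; nra).
  apply Rabs_le. split; lra.
Qed.

Definition ysol a phi xa x :=
  if Rlt_dec x 2 then Pp a x else if Rlt_dec x 4 then 0 else yd phi xa x.

Definition eN (xa : R) (n : nat) : R :=
  match n with
  | O => 2
  | S m => if Nat.even m then 4 * INR (Nat.div2 m) else 4 * INR (Nat.div2 m) + xa
  end.

Section Main.
Variables (a : R) (phi : R -> R) (xa : R).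
Hypotheses (Ha : 0 < a) (H0 : phi 0 = 0)
  (Hd : forall x, is_derive phi x (- a * phi x - sin (PI * x / 2)))
  (Hxa : 0 < xa) (Hpxa : phi xa = 0) (Hnz : forall x, 0 < x < xa -> phi x <> 0).

Let y := ysol a phi xa.

Lemma xa4 : xa <= 4. Proof. exact (xa_le4 a phi xa Ha H0 Hd Hnz). Qed.
Lemma phiN x : 0 < x < xa -> phi x < 0. Proof. intro; eapply (phi_neg a phi xa H0 Hd Hnz); eauto. Qed.
Lemma phiB x : 0 <= x -> Rabs (phi x) <= (a + PI) / (a ^ 2 + (PI / 2) ^ 2).
Proof. intro; eapply (phi_bound a phi Ha H0 Hd); eauto. Qed.

Lemma y_ge4 x : 4 <= x -> y x = yd phi xa x.
Proof. intro. unfold y, ysol. destruct (Rlt_dec x 2); [lra|]. destruct (Rlt_dec x 4); [lra|]. reflexivity. Qed.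

Lemma y_lt2 x : x < 2 -> y x = Pp a x.
Proof. intro. unfold y, ysol. destruct (Rlt_dec x 2); [reflexivity|lra]. Qed.

Lemma y_mid x : 2 <= x <= 4 -> y x = 0.
Proof.
  intro. destruct (Req_dec x 4) as [->|].
  - rewrite y_ge4 by lra. replace 4 with (4 * INR 1 + 0) by (simpl; ring).
    rewrite yd_val by lra. destruct (Rlt_dec 0 xa); [exact H0|reflexivity].
  - unfold y, ysol. destruct (Rlt_dec x 2); [lra|]. destruct (Rlt_dec x 4); [reflexivity|lra].
Qed.

Lemma y_phi_piece (k : nat) x : (1 <= k)%nat -> 4 * INR k <= x <= 4 * INR k + xa -> y x = phi (x - 4 * INR k).
Proof.
  intros Hk Hx. assert (Hk' : 1 <= INR k) by (apply (le_INR 1); exact Hk).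
  pose proof xa4.
  rewrite y_ge4 by lra.
  destruct (Rlt_dec (x - 4 * INR k) 4) as [Hr|Hr].
  - replace x with (4 * INR k + (x - 4 * INR k)) at 1 by ring.
    rewrite yd_val by lra. destruct (Rlt_dec (x - 4 * INR k) xa); [reflexivity|].
    replace (x - 4 * INR k) with xa by lra. auto.
  - replace x with (4 * INR (S k) + 0) by (rewrite S_INR; lra).
    rewrite yd_val by lra. destruct (Rlt_dec 0 xa); [|lra].
    replace (4 * INR (S k) + 0 - 4 * INR k) with 4 by (rewrite S_INR; ring).
    replace 4 with xa by lra. rewrite H0, Hpxa. reflexivity.
Qed.

Lemma y_zero_piece (k : nat) x : (1 <= k)%nat -> 4 * INR k + xa <= x <= 4 * INR k + 4 -> y x = 0.
Proof.
  intros Hk Hx. assert (Hk' : 1 <= INR k) by (apply (le_INR 1); exact Hk).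
  pose proof xa4.
  rewrite y_ge4 by lra.
  destruct (Rlt_dec (x - 4 * INR k) 4) as [Hr|Hr].
  - replace x with (4 * INR k + (x - 4 * INR k)) at 1 by ring.
    rewrite yd_val by lra. destruct (Rlt_dec (x - 4 * INR k) xa); [lra|reflexivity].
  - replace x with (4 * INR (S k) + 0) by (rewrite S_INR; lra).
    rewrite yd_val by lra. destruct (Rlt_dec 0 xa); [exact H0|reflexivity].
Qed.

Let L := a * Mb a + 1.

Lemma L_pos : 0 < L.
Proof. destruct (Mb_parts a Ha). unfold L, Mb. assert (0 <= a * Mb a) by (apply Rmult_le_pos; unfold Mb; lra). unfold Mb in *. lra. Qed.

Lemma deriv_bound (g : R -> R) s x : Rabs (g x) <= Mb a -> Rabs (- a * g x - sin s) <= L.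
Proof.
  intro H. unfold L. pose proof (SIN_bound s).
  eapply Rle_trans. { unfold Rminus. apply Rabs_triang. }
  rewrite Rabs_Ropp, Rabs_mult, Rabs_Ropp, (Rabs_right a) by lra.
  assert (a * Rabs (g x) <= a * Mb a) by (apply Rmult_le_compat_l; lra).
  assert (Rabs (sin s) <= 1) by (apply Rabs_le; lra). lra.
Qed.

Lemma Lip_phi : Lip phi L 0 xa.
Proof.
  apply Lip_deriv with (g' := fun x => - a * phi x - sin (PI * x / 2)).
  - intros; apply Hd.
  - intros x Hx. apply deriv_bound.
    destruct (Mb_parts a Ha). unfold Mb.
    pose proof (phiB x ltac:(lra)). lra.
Qed.

Lemma Lip_period (k : nat) : (1 <= k)%nat -> Lip y L (4 * INR k) (4 * INR k + 4).
Proof.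
  intro Hk. pose proof xa4.
  apply Lip_glue with (4 * INR k + xa).
  - apply Lip_ext with (fun x => phi (x - 4 * INR k)).
    + pose proof (Lip_shift phi L 0 xa (4 * INR k) Lip_phi) as HL.
      replace (0 + 4 * INR k) with (4 * INR k) in HL by ring.
      replace (xa + 4 * INR k) with (4 * INR k + xa) in HL by ring. exact HL.
    + intros; apply y_phi_piece; auto.
  - apply Lip_ext with (fun _ => 0).
    + intros u v _ ? _. rewrite Rminus_0_r, Rabs_R0. pose proof L_pos. apply Rmult_le_pos; lra.
    + intros; apply (y_zero_piece k); auto.
Qed.

Lemma Lip_zero p q : (forall x, p <= x <= q -> y x = 0) -> Lip y L p q.
Proof.
  intro H. apply Lip_ext with (fun _ => 0); [|exact H].
  intros u v _ ? _. rewrite Rminus_0_r, Rabs_R0. pose proof L_pos. apply Rmult_le_pos; lra.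
Qed.

Lemma Lip_tail (n : nat) : Lip y L 4 (4 * INR n + 4).
Proof.
  induction n as [|n IH].
  - simpl. replace (4 * 0 + 4) with 4 by ring. intros u v ? ? ?.
    replace v with u by lra. replace (y u - y u) with 0 by ring. rewrite Rabs_R0. pose proof L_pos. nra.
  - apply Lip_glue with (4 * INR n + 4); [exact IH|].
    replace (4 * INR n + 4) with (4 * INR (S n)) by (rewrite S_INR; ring).
    apply Lip_period. lia.
Qed.

Lemma Lip_all d : 3/2 <= d -> Lip y L (3/2) d.
Proof.
  intro Hd'. destruct (decomp d ltac:(lra)) as [k [r [-> Hr]]].
  apply Lip_sub with (3/2) (4 * INR k + 4); [|lra|lra].
  apply Lip_glue with 2.
  - apply Lip_ext with (Pp a).
    + apply Lip_deriv with (g' := fun x => - a * Pp a x - sin (PI * x * (1 + 1/2))).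
      * intros; apply Pp_deriv; exact Ha.
      * intros x Hx. apply deriv_bound. apply Pp_bound; auto.
    + intros x Hx. destruct (Req_dec x 2) as [->|].
      * rewrite y_mid by lra. rewrite Pp_2. reflexivity.
      * apply y_lt2. lra.
  - apply Lip_glue with 4.
    + apply Lip_zero. apply y_mid.
    + apply Lip_tail.
Qed.


Lemma is_derive_shift (f : R -> R) s x df : is_derive f (x - s) df -> is_derive (fun t => f (t - s)) x df.
Proof.
  intro H. assert (Hg : is_derive (fun t => t - s) x 1) by (auto_derive; [exact I| ring]).
  pose proof (is_derive_comp f (fun t => t - s) x df 1 H Hg) as K.
  exact (is_derive_eq _ _ _ _ K (Rmult_1_l df)).
Qed.

Lemma is_derive_zero x : is_derive (fun _ : R => 0) x 0.
Proof. exact (is_derive_const 0 x). Qed.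

Lemma eN_S m : eN xa (S m) = if Nat.even m then 4 * INR (Nat.div2 m) else 4 * INR (Nat.div2 m) + xa.
Proof. reflexivity. Qed.

Lemma eN_even k : eN xa (S (2 * k)) = 4 * INR k.
Proof. rewrite eN_S. rewrite Nat.even_even, Nat.div2_double. reflexivity. Qed.

Lemma eN_odd k : eN xa (S (2 * k + 1)) = 4 * INR k + xa.
Proof. rewrite eN_S, Nat.even_odd, Nat.div2_odd'. reflexivity. Qed.

Lemma y_deriv x : 3/2 < x -> ~ (exists n, x = eN xa n) ->
  exists lam, lam_adm (y x) lam /\ is_derive y x (field a x (y x) lam).
Proof.
  intros Hx HN.
  assert (Hx2 : x <> 2) by (intro E; apply HN; exists O; exact E).
  assert (Hk4 : forall k, x <> 4 * INR k) by (intros k E; apply HN; exists (S (2 * k)); rewrite eN_even; exact E).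
  assert (Hka : forall k, x <> 4 * INR k + xa) by (intros k E; apply HN; exists (S (2 * k + 1)); rewrite eN_odd; exact E).
  pose proof xa4.
  destruct (Rlt_dec x 2) as [Hlt2|Hge2].
  - exists 1. rewrite y_lt2 by lra. split.
    + left. split; [apply Pp_pos; auto; lra | reflexivity].
    + apply is_derive_ext_loc with (Pp a).
      * apply loc_eq with (x - 1) 2; [lra|]. intros t Ht. symmetry. apply y_lt2. lra.
      * unfold field. apply Pp_deriv. exact Ha.
  - destruct (Rlt_dec x 4) as [Hlt4|Hge4].
    + destruct (sliding x ltac:(lra)) as [lam [Hl Hs]]. exists lam.
      rewrite y_mid by lra. split.
      * right; right. split; [reflexivity|exact Hl].
      * apply is_derive_ext_loc with (fun _ => 0).
        -- apply loc_eq with 2 4; [lra|]. intros t Ht. symmetry. apply y_mid. lra.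
        -- unfold field. rewrite Hs. replace (- a * 0 - 0) with 0 by ring. apply is_derive_zero.
    + destruct (decomp x ltac:(lra)) as [k [r [Ex Hr]]].
      assert (Hr0 : r <> 0) by (intro; apply (Hk4 k); lra).
      assert (Hra : r <> xa) by (intro; apply (Hka k); lra).
      assert (Hk1 : (1 <= k)%nat).
      { destruct k; [simpl in Ex; lra | lia]. }
      assert (Hk' : 1 <= INR k) by (apply (le_INR 1); exact Hk1).
      destruct (Rlt_dec r xa) as [Hrxa|Hrxa].
      * exists (-1). assert (Hy : y x = phi r).
        { rewrite (y_phi_piece k) by (auto; lra). f_equal. lra. }
        rewrite Hy. split.
        -- right; left. split; [apply phiN; lra | reflexivity].
        -- apply is_derive_ext_loc with (fun t => phi (t - 4 * INR k)).
           ++ apply loc_eq with (4 * INR k) (4 * INR k + xa); [lra|].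
              intros t Ht. symmetry. apply y_phi_piece; auto; lra.
           ++ apply is_derive_shift. replace (x - 4 * INR k) with r by lra.
              eapply is_derive_eq; [apply Hd|]. unfold field.
              replace (PI * x * (1 + -1 / 2)) with (PI * r / 2 + 2 * INR k * PI) by (rewrite Ex; field).
              rewrite sin_period. reflexivity.
      * destruct (sliding x ltac:(lra)) as [lam [Hl Hs]]. exists lam.
        assert (Hy : y x = 0) by (apply (y_zero_piece k); auto; lra).
        rewrite Hy. split.
        -- right; right. split; [reflexivity|exact Hl].
        -- apply is_derive_ext_loc with (fun _ => 0).
           ++ apply loc_eq with (4 * INR k + xa) (4 * INR k + 4); [lra|].
              intros t Ht. symmetry. apply (y_zero_piece k); auto; lra.
           ++ unfold field. rewrite Hs. replace (- a * 0 - 0) with 0 by ring. apply is_derive_zero.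
Qed.

Lemma y_solution : is_solution a (3/2) y.
Proof.
  split; [lra|]. split.
  - intros d Hd'. apply Lip_abs_cont with L; [apply L_pos|]. apply Lip_all. exact Hd'.
  - exists (fun x => exists n, x = eN xa n). split; [apply negl_seq|].
    intros x Hx HN. apply y_deriv; auto.
Qed.

Lemma y_nonpos x : 2 < x -> y x <= 0.
Proof.
  intro Hx. destruct (Rlt_dec x 4). { rewrite y_mid by lra. lra. }
  rewrite y_ge4 by lra. destruct (decomp x ltac:(lra)) as [k [r [-> Hr]]].
  rewrite yd_val by exact Hr. destruct (Rlt_dec r xa); [|lra].
  destruct (Req_dec r 0) as [->|]; [rewrite H0; lra|]. left; apply phiN; lra.
Qed.

End Main.

Theorem proposition3 :
  forall a : R, 0 < a ->
  forall (phi : R -> R) (xa : R),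
    phi 0 = 0 ->
    (forall x, is_derive phi x (- a * phi x - sin (PI * x / 2))) ->
    0 < xa -> phi xa = 0 -> (forall x, 0 < x < xa -> phi x <> 0) ->
  exists (x0 : R) (y : R -> R),
    is_solution a x0 y /\ 0 < y x0 /\
    exists xT : R,
      x0 < xT /\ y xT = 0 /\
      (forall x, x0 <= x < xT -> y x <> 0) /\
      (forall x, xT < x -> y x <= 0) /\
      exists n : nat, forall x, 4 * INR n <= x -> y x = yd phi xa x.
Proof.
  intros a Ha phi xa H0 Hd Hxa Hpxa Hnz.
  exists (3/2), (ysol a phi xa). split; [eapply y_solution; eauto|]. split.
  { rewrite (y_lt2 a phi xa) by lra. apply Pp_pos; auto; lra. }
  exists 2. split; [lra|]. split; [apply (y_mid a phi xa H0); lra|]. split.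
  { intros x Hx. rewrite (y_lt2 a phi xa) by lra. pose proof (Pp_pos a x Ha ltac:(lra)). lra. }
  split; [intros; eapply y_nonpos; eauto|].
  exists 1%nat. intros x Hx. simpl in Hx. apply y_ge4. lra.
Qed.
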